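(* For a nonzero $\vec v\in\mathbb{C}^3$, let $I_{\langle\vec v\rangle}\in SU(3)$ be the unique element having $\langle\vec v\rangle$ as its $+1$-eigenspace and the Hermitian orthogonal complement $\langle\vec v\rangle^\perp$ as its $-1$-eigenspace (the geodesic inversion of $\mathbb{C}P(2)$ at $\langle\vec v\rangle$). For nonzero $\vec v,\vec w\in\mathbb{C}^3$, the composition $I_{\langle\vec v\rangle}I_{\langle\vec w\rangle}$ is a geodesic inversion (i.e. equals $I_{\langle\vec u\rangle}$ for some nonzero $\vec u$) if and only if $\vec v$ and $\vec w$ are Hermitian orthogonal.
   Context: The geodesic inversions are exactly the elements of $SU(3)$ of trace $-1$. *)

(* Defs.v *)
From HB Require Import structures.
From mathcomp Require Import all_boot all_order all_algebra.
From mathcomp Require Import complex.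
From mathcomp Require Import reals.
Set Implicit Arguments. Unset Strict Implicit. Unset Printing Implicit Defensive.
Import Order.TTheory GRing.Theory Num.Theory.
Local Open Scope ring_scope.

Definition hdot (C : numClosedFieldType) (x y : 'cV[C]_3) : C :=
  \sum_(i < 3) x i 0 * (y i 0)^*.

Definition horth (C : numClosedFieldType) (x y : 'cV[C]_3) : Prop := hdot x y = 0.

Definition adjmx (C : numClosedFieldType) (M : 'M[C]_3) : 'M[C]_3 :=
  (map_mx Num.conj M)^T.

Definition in_SU3 (C : numClosedFieldType) (M : 'M[C]_3) : Prop :=
  M *m adjmx M = 1%:M /\ \det M = 1.

Definition geod_inv_at (C : numClosedFieldType) (v : 'cV[C]_3) (M : 'M[C]_3) : Prop :=
  in_SU3 M /\
  (forall x : 'cV[C]_3, M *m x = x <-> exists c : C, x = c *: v) /\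
  (forall x : 'cV[C]_3, M *m x = - x <-> horth x v).

(* Main.v *)
Require Import Defs.
From HB Require Import structures.
From mathcomp Require Import all_boot all_order all_algebra.
From mathcomp Require Import complex.
From mathcomp Require Import reals.
From mathcomp Require Import ring.
Import Order.TTheory GRing.Theory Num.Theory.
Local Open Scope ring_scope.

Section H.
Variable C : numClosedFieldType.
Implicit Types (x y u v w : 'cV[C]_3) (M Iv Iw : 'M[C]_3).

Definition i0 : 'I_3 := @Ordinal 3 0 isT.
Definition i1 : 'I_3 := @Ordinal 3 1 isT.
Definition i2 : 'I_3 := @Ordinal 3 2 isT.

Lemma sum3 (F : 'I_3 -> C) : \sum_(i < 3) F i = F i0 + F i1 + F i2.
Proof.
rewrite !big_ord_recl big_ord0 addr0 addrA; congr (F _ + F _ + F _); exact: val_inj.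
Qed.

Lemma ord3P (P : 'I_3 -> Prop) : P i0 -> P i1 -> P i2 -> forall k, P k.
Proof.
move=> H0 H1 H2 [[|[|[|k]]] Hk] //.
- by rewrite (_ : Ordinal Hk = i0) //; apply: val_inj.
- by rewrite (_ : Ordinal Hk = i1) //; apply: val_inj.
- by rewrite (_ : Ordinal Hk = i2) //; apply: val_inj.
Qed.

Lemma cv3P x y : x i0 0 = y i0 0 -> x i1 0 = y i1 0 -> x i2 0 = y i2 0 -> x = y.
Proof.
move=> H0 H1 H2; apply/matrixP => k j; rewrite (ord1 j).
by elim/ord3P: k.
Qed.

Lemma hdotE x y : hdot x y = x i0 0 * (y i0 0)^* + x i1 0 * (y i1 0)^* + x i2 0 * (y i2 0)^*.
Proof. by rewrite /hdot sum3. Qed.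

Lemma hdotC x y : hdot y x = (hdot x y)^*.
Proof. by rewrite !hdotE !rmorphD !rmorphM /= !conjCK ![_^* * _]mulrC. Qed.

Lemma hdot_self_eq0 v : (hdot v v == 0) = (v == 0).
Proof.
apply/idP/idP; last by move/eqP->; rewrite hdotE !mxE !mul0r !addr0.
move=> H; have: \sum_(i < 3) `|v i 0| ^+ 2 == 0.
  have ->: \sum_(i < 3) `|v i 0| ^+ 2 = hdot v v.
    by rewrite /hdot; apply: eq_bigr => i _; rewrite normCK.
  by [].
rewrite psumr_eq0 => [/allP Hall|i _]; last exact: exprn_ge0.
apply/eqP/matrixP => i j; rewrite (ord1 j) mxE.
have := Hall i (mem_index_enum i); rewrite implyTb expf_eq0 /= normr_eq0.
by move/eqP.
Qed.

Lemma hdotBZl c x y v : hdot (c *: x - y) v = c * hdot x v - hdot y v.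
Proof. rewrite !hdotE !mxE; ring. Qed.

Lemma Iform v M : v != 0 -> geod_inv_at v M ->
  forall x, M *m x = (2 * hdot x v / hdot v v) *: v - x.
Proof.
move=> nz [_ [Hp Hm]] x.
have nn : hdot v v != 0 by rewrite hdot_self_eq0.
set c := hdot x v / hdot v v.
have Hy : M *m (c *: v - x) = - (c *: v - x).
  apply/Hm; rewrite /horth hdotBZl /c mulrAC -mulrA divff // mulr1 subrr //.
have Hv : M *m v = v by apply/Hp; exists 1; rewrite scale1r.
rewrite {1}(_ : x = c *: v - (c *: v - x)); last by rewrite opprB addrC subrK.
rewrite mulmxBr -scalemxAr Hv Hy opprK.
have -> : 2 * hdot x v / hdot v v = c + c by rewrite /c; ring.
by rewrite scalerDl addrA.
Qed.

Lemma Ment v M : v != 0 -> geod_inv_at v M ->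
  forall i j, M i j = 2 * v i 0 * (v j 0)^* / hdot v v - (i == j)%:R.
Proof.
move=> nz HM i j.
have := congr1 (fun X : 'cV[C]_3 => X i 0) (@Iform v M nz HM (delta_mx j 0)).
rewrite -colE !mxE => ->.
have -> : hdot (delta_mx j 0) v = (v j 0)^*.
  rewrite /hdot (bigD1 j) //= big1 => [|k /negbTE kj]; last by rewrite !mxE kj mul0r.
  by rewrite !mxE !eqxx mul1r addr0.
rewrite andbT; ring.
Qed.

Lemma e01 : (i0 == i1) = false. Proof. by []. Qed.
Lemma e02 : (i0 == i2) = false. Proof. by []. Qed.
Lemma e10 : (i1 == i0) = false. Proof. by []. Qed.
Lemma e12 : (i1 == i2) = false. Proof. by []. Qed.
Lemma e20 : (i2 == i0) = false. Proof. by []. Qed.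
Lemma e21 : (i2 == i1) = false. Proof. by []. Qed.
Definition eqs := (e01, e02, e10, e12, e20, e21, eqxx).

Lemma tr_I u M : u != 0 -> geod_inv_at u M -> M i0 i0 + M i1 i1 + M i2 i2 = -1.
Proof.
move=> nz H; rewrite !(@Ment u M nz H) !eqxx.
have := nz; rewrite -hdot_self_eq0 hdotE => nn.
rewrite /=; field; exact: nn.
Qed.

Lemma tr_prod v w Iv Iw : v != 0 -> w != 0 -> geod_inv_at v Iv -> geod_inv_at w Iw ->
  (Iv *m Iw) i0 i0 + (Iv *m Iw) i1 i1 + (Iv *m Iw) i2 i2 =
  4 * (hdot v w * hdot w v) / (hdot v v * hdot w w) - 1.
Proof.
move=> nzv nzw Hv Hw; rewrite !mxE !sum3 !(@Ment v Iv nzv Hv) !(@Ment w Iw nzw Hw) !eqs.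
have := nzv; rewrite -hdot_self_eq0 hdotE => nv.
have := nzw; rewrite -hdot_self_eq0 hdotE => nw.
rewrite /= !subr0 !hdotE; field; by rewrite nv nw.
Qed.

Definition cross v w : 'cV[C]_3 := \col_k
  (if k == i0 then (v i1 0 * w i2 0 - v i2 0 * w i1 0)^*
   else if k == i1 then (v i2 0 * w i0 0 - v i0 0 * w i2 0)^*
   else (v i0 0 * w i1 0 - v i1 0 * w i0 0)^*).

Ltac crs := rewrite ?hdotE !mxE ?eqs /= ?conjCK ?(rmorphB, rmorphM, rmorphD) /= ?conjCK.

Lemma hdot_cross_l v w : hdot v (cross v w) = 0.
Proof. crs; ring. Qed.
Lemma hdot_cross_r v w : hdot w (cross v w) = 0.
Proof. crs; ring. Qed.
Lemma lagrange v w : hdot (cross v w) (cross v w) =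
  hdot v v * hdot w w - hdot v w * hdot w v.
Proof. crs; ring. Qed.

Lemma decomp v w x k :
  hdot (cross v w) (cross v w) * x k 0 =
    (hdot w w * hdot x v - hdot w v * hdot x w) * v k 0
  + (hdot v v * hdot x w - hdot v w * hdot x v) * w k 0
  + hdot x (cross v w) * (cross v w) k 0.
Proof. elim/ord3P: k; crs; ring. Qed.

Lemma prodform v w Iv Iw : v != 0 -> w != 0 -> geod_inv_at v Iv -> geod_inv_at w Iw ->
  hdot w v = 0 -> forall x k,
  (Iv *m Iw *m x) k 0 = x k 0 - 2 * hdot x v / hdot v v * v k 0
                              - 2 * hdot x w / hdot w w * w k 0.
Proof.
move=> nzv nzw Hv Hw hwv x k.
rewrite -mulmxA (@Iform w Iw nzw Hw) (@Iform v Iv nzv Hv) hdotBZl hwv !mxE; ring.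
Qed.

Lemma hdot_lin a b x y z : hdot (a *: x + b *: y) z = a * hdot x z + b * hdot y z.
Proof. rewrite !hdotE !mxE; ring. Qed.

Lemma adjmxM (A B : 'M[C]_3) : adjmx (A *m B) = adjmx B *m adjmx A.
Proof. by rewrite /adjmx map_mxM trmx_mul. Qed.

Lemma hdotZl c x y : hdot (c *: x) y = c * hdot x y.
Proof. rewrite !hdotE !mxE; ring. Qed.

Lemma hdot0l y : hdot 0 y = 0.
Proof. rewrite !hdotE !mxE; ring. Qed.

Lemma two_neq0 : (2 : C) != 0.
Proof. by rewrite pnatr_eq0. Qed.

End H.
Arguments cross {C}.
Arguments lagrange {C}.
Arguments decomp {C}.
Arguments hdot_cross_l {C}.
Arguments hdot_cross_r {C}.
Arguments hdotC {C}.
Arguments hdotE {C}.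
Arguments hdot_lin {C}.
Arguments hdotZl {C}.
Arguments hdot0l {C}.
Arguments hdotBZl {C}.
Arguments hdot_self_eq0 {C}.
Arguments adjmxM {C}.

Theorem lemma2p4 (R : realType) (v w : 'cV[R[i]]_3) (Iv Iw : 'M[R[i]]_3) :
  v != 0 -> w != 0 ->
  geod_inv_at v Iv -> geod_inv_at w Iw ->
  ((exists u : 'cV[R[i]]_3, u != 0 /\ geod_inv_at u (Iv *m Iw)) <-> horth v w).
Proof.
move=> nzv nzw Hv Hw.
have nv : hdot v v != 0 by rewrite hdot_self_eq0.
have nw : hdot w w != 0 by rewrite hdot_self_eq0.
have t2 := @two_neq0 (R[i]).
split.
- case=> u [nzu Hu].
  have := @tr_I _ u _ nzu Hu; rewrite (@tr_prod _ v w Iv Iw nzv nzw Hv Hw).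
  move/eqP; rewrite -subr_eq0 opprK subrK.
  have t4 : (4 : R[i]) != 0 by rewrite pnatr_eq0.
  rewrite !mulf_eq0 !invr_eq0 mulf_eq0 (negbTE nv) (negbTE nw) (negbTE t4) /=.
  rewrite (hdotC v w) conjC_eq0 orbb orbF => /eqP.
  by [].
- move=> hvw.
  have hwv : hdot w v = 0 by rewrite hdotC hvw rmorph0.
  have nuE : hdot (cross v w) (cross v w) = hdot v v * hdot w w.
    by rewrite lagrange hvw mul0r subr0.
  have nu : hdot (cross v w) (cross v w) != 0 by rewrite nuE mulf_neq0.
  exists (cross v w); split; first by rewrite -hdot_self_eq0.
  have P := @prodform _ v w Iv Iw nzv nzw Hv Hw hwv.
  split; [|split].
  + case: Hv => [[Uv Dv] _]; case: Hw => [[Uw Dw] _].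
    split; last by rewrite det_mulmx Dv Dw mulr1.
    by rewrite adjmxM mulmxA -(mulmxA Iv) Uw mulmx1 Uv.
  + move=> x; split.
    * move=> Hx.
      set a := 2 * hdot x v / hdot v v.
      set b := 2 * hdot x w / hdot w w.
      have E' : a *: v + b *: w = 0.
        apply/matrixP => k j; rewrite (ord1 j) !mxE.
        have := congr1 (fun X : 'cV_3 => X k 0) Hx; rewrite /= P -/a -/b => Hk.
        have -> : a * v k 0 + b * w k 0 = x k 0 - (x k 0 - a * v k 0 - b * w k 0) by ring.
        by rewrite Hk subrr.
      have ha : a * hdot v v = 0.
        have := congr1 (fun y => hdot y v) E'; rewrite /= hdot_lin hwv mulr0 addr0 hdot0l //.
      have hb : b * hdot w w = 0.
        have := congr1 (fun y => hdot y w) E'; rewrite /= hdot_lin hvw mulr0 add0r hdot0l //.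
      have hxv0 : hdot x v = 0.
        have -> : hdot x v = a * hdot v v / 2 by rewrite /a; field; rewrite ?t2 ?nv ?nw.
        by rewrite ha mul0r.
      have hxw0 : hdot x w = 0.
        have -> : hdot x w = b * hdot w w / 2 by rewrite /b; field; rewrite ?t2 ?nv ?nw.
        by rewrite hb mul0r.
      exists (hdot x (cross v w) / hdot (cross v w) (cross v w)).
      apply/matrixP => k j; rewrite (ord1 j) mxE.
      apply: (mulfI nu); rewrite decomp hxv0 hxw0; field; exact: nu.
    * case=> c ->; apply/matrixP => k j; rewrite (ord1 j) P.
      rewrite !hdotZl (hdotC v) hdot_cross_l (hdotC w) hdot_cross_r rmorph0.
      by rewrite !mulr0 !mul0r !subr0.
  + move=> x; split.
    * move=> Hx; rewrite /horth.
      set a := 2 * hdot x v / hdot v v.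
      set b := 2 * hdot x w / hdot w w.
      have Ex : x = (a / 2) *: v + (b / 2) *: w.
        apply/matrixP => k j; rewrite (ord1 j) !mxE.
        have := congr1 (fun X : 'cV_3 => X k 0) Hx; rewrite /= P -/a -/b mxE => Hk.
        have -> : x k 0 = ((x k 0 - a * v k 0 - b * w k 0) - - x k 0 + a * v k 0 + b * w k 0) / 2.
          by field; rewrite ?t2.
        by rewrite Hk subrr add0r; ring.
      by rewrite Ex hdot_lin hdot_cross_l hdot_cross_r !mulr0 addr0.
    * move=> hxu; apply/matrixP => k j; rewrite (ord1 j) P mxE.
      have D := decomp v w x k.
      rewrite hxu hvw hwv nuE in D.
      have Xk : x k 0 = (hdot w w * hdot x v * v k 0 + hdot v v * hdot x w * w k 0)
                        / (hdot v v * hdot w w).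
        apply: (mulfI (mulf_neq0 nv nw)); rewrite D; field; by rewrite nv nw.
      rewrite Xk; field; by rewrite nv nw.
Qed.
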